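(* There is an instance of unweighted online stochastic matching for which every online algorithm satisfies \[ \frac{\textsc{Alg}}{\textsc{JL}}\le1-\frac{1}{1-\ln2}\Big(\frac{1}{2e}-\frac{\ln2}{e^2}\Big)\approx0.706, \] where $\textsc{Alg}$ is the algorithm's expected number of matched edges and $\textsc{JL}$ is the optimal value of the Jaillet–Lu LP for the instance.
   Context: Poisson arrival model: $I$ is a finite set of online types and $J$ a finite set of offline vertices, with edges $E\subseteq I\times J$, $I_j=\{i:(i,j)\in E\}$, and $J_i=\{j:(i,j)\in E\}$. Type $i$ arrives by an independent Poisson process of rate $\lambda_i>0$ on $[0,1]$. Each arrival must be matched immediately and irrevocably to an unmatched neighbor, or left unmatched. Unweighted means all $w_{ij}=1$. Jaillet–Lu LP: maximize $\sum_{(i,j)\in E}w_{ij}x_{ij}$ subject to: - $\sum_{j\in J_i}x_{ij}\le\lambda_i$ for all $i$; - $\sum_{i\in I_j}x_{ij}\le1$ for all $j$; - $\sum_{i\in I_j}(2x_{ij}-\lambda_i)^+\le1-\ln2$ for all $j$; - $x\ge0$. Here $z^+=\max\{z,0\}$. *)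

(* Defs.v *)
From HB Require Import structures.
From mathcomp Require Import all_boot all_order all_algebra.
From mathcomp Require Import all_classical all_reals all_analysis.
Set Implicit Arguments. Unset Strict Implicit. Unset Printing Implicit Defensive.
Import Order.TTheory GRing.Theory Num.Theory.
Local Open Scope classical_set_scope.
Local Open Scope ring_scope.

Section OnlineStochasticMatching.
Variables (R : realType) (I J : finType).

(** An instance: edge set [E] and arrival rates [lam] (Poisson rate of type i
    on [0,1]).  All weights are 1 (unweighted). *)

(** History of the online process so far: one entry per arrival,
    (arrival time, online type, decision: [Some j] = matched to offline j,
    [None] = left unmatched), in chronological order. *)
Definition history := seq (R * I * option J).

Definition matched_in (h : history) (j : J) : bool :=
  has (fun a : R * I * option J => a.2 == Some j) h.

(** A (possibly randomized) online algorithm, as a behavioural policy: given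
    the history, the current arrival time [u] and the arriving type [i], it
    gives the probability [p h u i o] of taking option [o]. *)
Definition policy := history -> R -> I -> option J -> R.

Definition valid_policy (E : {set I * J}) (p : policy) : Prop :=
  forall (h : history) (u : R) (i : I),
    (forall o, 0 <= p h u i o) /\
    (\sum_(o : option J) p h u i o = 1) /\
    (forall j, 0 < p h u i (Some j) -> ((i, j) \in E) /\ ~~ matched_in h j).

Definition total_rate (lam : I -> R) : R := \sum_i lam i.

(** The next arrival occurs at time u in [s,1] of type i with
    density lam i * exp(-Lambda (u - s)). *)
Fixpoint exp_matches_k (lam : I -> R) (p : policy) (k : nat) (h : history) (s : R)
    : \bar R :=
  match k with
  | 0 => 0%E
  | k'.+1 =>
    (\int[lebesgue_measure]_(u in `[s, 1%R])
       ((expR (- total_rate lam * (u - s)))%:E *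
        \sum_(i : I) \sum_(o : option J)
          ((lam i * p h u i o)%:E *
           (((o != None)%:R : R)%:E + exp_matches_k lam p k' (rcons h (u, i, o)) u)%E)%E))%E
  end.

(** Expected number of matched edges of the algorithm over the whole horizon
    [0,1] (the limit = supremum of the nondecreasing truncations). *)
Definition ALG (lam : I -> R) (p : policy) : \bar R :=
  ereal_sup [set exp_matches_k lam p k [::] 0 | k in [set: nat]].

Definition JL_feasible (E : {set I * J}) (lam : I -> R) (x : I -> J -> R) : Prop :=
  (forall i j, 0 <= x i j) /\
  (forall i j, (i, j) \notin E -> x i j = 0) /\
  (forall i, \sum_(j | (i, j) \in E) x i j <= lam i) /\
  (forall j, \sum_(i | (i, j) \in E) x i j <= 1) /\
  (forall j, \sum_(i | (i, j) \in E) Num.max (2 * x i j - lam i) 0 <= 1 - ln 2).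

Definition JL_objective (E : {set I * J}) (x : I -> J -> R) : R :=
  \sum_(e in E) x e.1 e.2.

Definition JL_value (E : {set I * J}) (lam : I -> R) (v : R) : Prop :=
  (exists x, JL_feasible E lam x /\ JL_objective E x = v) /\
  (forall x, JL_feasible E lam x -> JL_objective E x <= v).

End OnlineStochasticMatching.

Definition jl_bound (R : realType) : R :=
  1 - (1 - ln 2)^-1 * ((2 * expR 1)^-1 - ln 2 / (expR 1 ^+ 2)).

(* Main.v *)
Require Import Defs.
From HB Require Import structures.
From mathcomp Require Import all_boot all_order all_algebra.
From mathcomp Require Import all_classical all_reals all_analysis.
From mathcomp Require Import ring lra.
Import Order.TTheory GRing.Theory Num.Theory.
Local Open Scope ring_scope.

Section H.
Variable R : realType.
Local Notation mu := (@lebesgue_measure R).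

Lemma int_mono (D : set R) (f g : R -> \bar R) :
  (forall x, D x -> (0 <= f x)%E) -> (forall x, D x -> (f x <= g x)%E) ->
  (\int[mu]_(x in D) f x <= \int[mu]_(x in D) g x)%E.
Proof.
move=> f0 fg.
have g0 : forall x, D x -> (0 <= g x)%E by move=> x Dx; exact: (le_trans (f0 x Dx) (fg x Dx)).
rewrite ge0_integralE // ge0_integralE //.
apply: ereal_sup_le => _ [h hf <-]; exists h => //= x.
apply: (le_trans (hf x)); rewrite /patch; case: ifP => // /set_mem Dx; exact: fg.
Qed.

Definition ex (a u : R) := expR (a * u).

Lemma is_derive_ex (a x : R) : is_derive x 1 (ex a) (a * expR (a * x)).
Proof.
rewrite /ex.
have -> : (fun u => expR (a * u)) = expR \o ( *%R a) by [].
rewrite mulrC.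
apply: is_derive1_comp.
have := @is_deriveZ R R^o R^o id a x 1 1 (is_derive_id x 1).
move=> H.
have E : a%:A = a :> R^o by rewrite /GRing.scale /= mulr1.
rewrite E in H.
exact: H.
Qed.

Definition ep3 (K1 a1 K2 a2 K3 a3 u : R) := K1 * ex a1 u + K2 * ex a2 u + K3 * ex a3 u.

Lemma is_derive_ep3 K1 a1 K2 a2 K3 a3 (x : R) :
  is_derive x 1 (ep3 K1 a1 K2 a2 K3 a3) (ep3 (K1 * a1) a1 (K2 * a2) a2 (K3 * a3) a3 x).
Proof.
have -> : ep3 K1 a1 K2 a2 K3 a3 = (K1 \*: ex a1) + (K2 \*: ex a2) + (K3 \*: ex a3) :> (R^o -> R^o).
  by apply/funext => u.
have H : is_derive x 1 ((K1 \*: ex a1) + (K2 \*: ex a2) + (K3 \*: ex a3) : R^o -> R^o)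
   (K1 *: (a1 * expR (a1 * x)) + K2 *: (a2 * expR (a2 * x)) + K3 *: (a3 * expR (a3 * x)) : R^o).
  apply: is_deriveD; [apply: is_deriveD|]; apply: is_deriveZ; exact: is_derive_ex.
suff -> : ep3 (K1 * a1) a1 (K2 * a2) a2 (K3 * a3) a3 x = 
   (K1 *: (a1 * expR (a1 * x)) + K2 *: (a2 * expR (a2 * x)) + K3 *: (a3 * expR (a3 * x)) : R^o) by [].
by rewrite /ep3 /ex /GRing.scale /= !mulrA.
Qed.

Lemma cont_ep3 K1 a1 K2 a2 K3 a3 : continuous (ep3 K1 a1 K2 a2 K3 a3 : R^o -> R^o).
Proof.
move=> x; apply: differentiable_continuous; apply/derivable1_diffP.
have := is_derive_ep3 K1 a1 K2 a2 K3 a3 x.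
by case.
Qed.

Lemma ftc_ep3 (K1 a1 K2 a2 K3 a3 s : R) : s < 1 ->
  (\int[mu]_(u in `[s, 1%R]) (ep3 (K1 * a1) a1 (K2 * a2) a2 (K3 * a3) a3 u)%:E
   = (ep3 K1 a1 K2 a2 K3 a3 1 - ep3 K1 a1 K2 a2 K3 a3 s)%:E)%E.
Proof.
move=> s1; rewrite EFinB.
apply: continuous_FTC2 => //.
- first [ exact: (continuous_subspaceT (cont_ep3 (K1 * a1) a1 (K2 * a2) a2 (K3 * a3) a3)) | apply/continuous_in_subspaceT => x _; exact: (cont_ep3 (K1 * a1) a1 (K2 * a2) a2 (K3 * a3) a3 x) | idtac "none" ].
- split.
  + by move=> x _; case: (is_derive_ep3 K1 a1 K2 a2 K3 a3 x).
  + by apply: cvg_at_right_filter; exact: cont_ep3.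
  + by apply: cvg_at_left_filter; exact: cont_ep3.
- move=> x _; rewrite derive1E; exact: (@derive_val R R^o R^o _ _ _ _ (is_derive_ep3 K1 a1 K2 a2 K3 a3 x)).
Qed.

Lemma ln2_gt0 : 0 < ln (2 : R).
Proof. by apply: ln_gt0; rewrite ltr1n. Qed.

Lemma ln2_lt1 : ln (2 : R) < 1.
Proof.
have h : (2 : R) < expR 1.
  have := @expR_gt1Dx R 1 (oner_neq0 _); by rewrite (_ : 1 + 1 = 2 :> R).
rewrite -[X in _ < X](@expRK R 1) ltr_ln ?posrE ?expR_gt0 //.
Qed.

Definition L : R := 1 + ln 2.
Definition cc : R := 1 - ln 2.
Lemma cc_gt0 : 0 < cc. Proof. by rewrite /cc subr_gt0 ln2_lt1. Qed.

Definition W1 (u : R) := 1 - expR (- L * (1 - u)).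
Definition W2 (u : R) := 2 - 2 * expR (-2 * (1 - u)) - 2 / cc * (expR (- L * (1 - u)) - expR (-2 * (1 - u))).

Lemma W1_le1 u : W1 u <= 1.
Proof. by rewrite /W1 lerBlDr lerDl expR_ge0. Qed.

Lemma W2_le u : u <= 1 -> W2 u <= 1 + W1 u.
Proof.
move=> u1.
have hl := ln2_gt0; have hl1 := ln2_lt1.
set A := expR (- L * (1 - u)); set B := expR (-2 * (1 - u)).
have BA : B <= A by rewrite ler_expR /L; nra.
have A0 : 0 <= A by exact: expR_ge0.
have d2 : 2 <= 2 / cc.
  rewrite ler_pdivlMr ?cc_gt0 //; rewrite /cc; nra.
rewrite /W2 /W1 -/A -/B.
set d := 2 / cc in d2 *.
nra.
Qed.

Definition Vst (m0 m1 : bool) (u : R) :=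
  if m0 then (if m1 then 0 else W1 u) else (if m1 then W1 u else W2 u).
Definition Gst (m0 m1 : bool) (u : R) :=
  if m0 then (if m1 then 0 else L + cc * W1 u) else (if m1 then L + cc * W1 u else 2 + 2 * W1 u).

Lemma eD (a x y : R) : a = x + y -> expR a = expR x * expR y.
Proof. by move=> ->; rewrite expRD. Qed.

Lemma eA (u s : R) : expR (-2 * (u - s)) = expR (2 * s) * expR (-2 * u).
Proof. by apply: eD; ring. Qed.
Lemma eB (u : R) : expR (- L * (1 - u)) = expR (- L) * expR (L * u).
Proof. by apply: eD; ring. Qed.
Lemma eC (u : R) : expR (-2 * (1 - u)) = expR (-2) / expR (-2 * u).
Proof.
rewrite (@eD (-2 * (1 - u)) (-2) (2 * u)); last by ring.
have -> : expR (2 * u) = (expR (-2 * u))^-1 :> R by rewrite -expRN; congr expR; ring.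
by [].
Qed.
Lemma eE (u : R) : expR ((L - 2) * u) = expR (L * u) * expR (-2 * u).
Proof. by apply: eD; ring. Qed.
Lemma eF (s : R) : expR (-2 * s) = (expR (2 * s))^-1.
Proof. by rewrite -expRN; congr expR; ring. Qed.
Lemma eG : expR (L * 1) = (expR (- L))^-1 :> R.

Proof. by rewrite -expRN opprK mulr1. Qed.
Lemma eH : expR (-2 * 1) = expR (-2) :> R.
Proof. by rewrite mulr1. Qed.

Lemma ftc_gen (g : R -> R) (K1 a1 K2 a2 K3 a3 s : R) : s < 1 ->
  (forall u, g u = ep3 (K1 * a1) a1 (K2 * a2) a2 (K3 * a3) a3 u) ->
  (\int[mu]_(u in `[s, 1%R]) (g u)%:E
   = (ep3 K1 a1 K2 a2 K3 a3 1 - ep3 K1 a1 K2 a2 K3 a3 s)%:E)%E.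
Proof.
move=> s1 H; rewrite -ftc_ep3 //; apply: eq_integral => u _; by rewrite H.
Qed.

Lemma ftc_state m0 m1 s : s < 1 ->
  (\int[mu]_(u in `[s, 1%R]) (expR (-2 * (u - s)) * Gst m0 m1 u)%:E = (Vst m0 m1 s)%:E)%E.
Proof.
move=> s1.
have nz a : expR a != 0 :> R by rewrite gt_eqF // expR_gt0.
have ccnz : cc != 0 by rewrite gt_eqF // cc_gt0.
have LB : L - 2 = - cc by rewrite /L /cc; ring.
pose e2s := expR (2 * s); pose em2 := expR (-2) : R; pose emL := expR (- L).
case: m0; case: m1 => /=.
- rewrite (@ftc_gen _ 0 0 0 0 0 0) //; last by move=> u; rewrite /ep3 !mul0r !add0r mulr0.
  rewrite /ep3 /=; congr EFin; ring.
- rewrite (@ftc_gen _ (- e2s) (-2) (e2s * emL) (L - 2) 0 0) //; last first.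
    move=> u; rewrite /ep3 /ex eA /W1 eB eE /e2s /emL LB mul0r mul0r addr0.
    rewrite /cc /L; ring.
  congr EFin; rewrite /ep3 /ex /W1 !mul0r !addr0 !eE eH eG (eF s) eB.
  rewrite /e2s /emL.
  have h1 := nz (2 * s); have h2 := nz (- L).
  field.
  by apply/andP.
- rewrite (@ftc_gen _ (- e2s) (-2) (e2s * emL) (L - 2) 0 0) //; last first.
    move=> u; rewrite /ep3 /ex eA /W1 eB eE /e2s /emL LB mul0r mul0r addr0.
    rewrite /cc /L; ring.
  congr EFin; rewrite /ep3 /ex /W1 !mul0r !addr0 !eE eH eG (eF s) eB.
  rewrite /e2s /emL.
  have h1 := nz (2 * s); have h2 := nz (- L).
  field.
  by apply/andP.
- rewrite (@ftc_gen _ (-2 * e2s) (-2) (2 / cc * e2s * emL) (L - 2) (2 * e2s * em2 * (1 - 1 / cc)) 0) //; last first.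
    move=> u; rewrite /ep3 /ex eA /W1 eB eE /e2s /emL LB.
    have z : expR (0 * u) = 1 :> R by rewrite mul0r expR0.
    rewrite z; field; exact: ccnz.
  have z1 : expR (0 * 1) = 1 :> R by rewrite mul0r expR0.
  have zs : expR (0 * s) = 1 :> R by rewrite mul0r expR0.
  congr EFin; rewrite /ep3 /ex /W2 z1 zs !eE eH eG (eF s) eB (eC s) (eF s).
  rewrite /e2s /emL /em2.
  have h1 := nz (2 * s); have h2 := nz (- L).
  field.
  by rewrite h1 h2 ccnz.
Qed.

Definition Ei : {set 'I_3 * 'I_2} := [set e | (val e.1 == 0%N) || (val e.1 == (val e.2).+1)].
Definition lami (i : 'I_3) : R := if val i == 0%N then 2 * ln 2 else cc.
Definition j0 : 'I_2 := @Ordinal 2 0 isT.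
Definition j1 : 'I_2 := @Ordinal 2 1 isT.
Definition i0 : 'I_3 := @Ordinal 3 0 isT.
Definition i1 : 'I_3 := @Ordinal 3 1 isT.
Definition i2 : 'I_3 := @Ordinal 3 2 isT.

Definition Vh (h : history R 'I_3 'I_2) (u : R) := Vst (matched_in h j0) (matched_in h j1) u.
Definition Bst (m0 m1 : bool) (i : 'I_3) (u : R) :=
  if m0 then (if m1 then 0 else (if (val i == 0%N) || (val i == 2%N) then 1 else W1 u))
  else (if m1 then (if (val i == 0%N) || (val i == 1%N) then 1 else W1 u) else 1 + W1 u).

Lemma total_rate_i : total_rate lami = 2.
Proof. rewrite /total_rate !big_ord_recr big_ord0 /= /lami /= /cc; ring. Qed.

Lemma sumB m0 m1 u : \sum_i lami i * Bst m0 m1 i u = Gst m0 m1 u.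
Proof.
rewrite !big_ord_recr big_ord0 /= /lami /Bst /Gst /=.
case: m0; case: m1 => /=; rewrite /L /cc; ring.
Qed.

Lemma ord2 (j : 'I_2) : j = j0 \/ j = j1.
Proof. case: j => [[|[|n]] H]; [left|right|by []]; exact: val_inj. Qed.
Lemma ord3 (i : 'I_3) : [\/ i = i0, i = i1 | i = i2].
Proof. case: i => [[|[|[|n]]] H]; [apply: Or31|apply: Or32|apply: Or33|by []]; exact: val_inj. Qed.

Lemma matched_rcons (h : history R 'I_3 'I_2) a j :
  matched_in (rcons h a) j = matched_in h j || (a.2 == Some j).
Proof. by rewrite /matched_in has_rcons orbC. Qed.

Lemma opt_bound (p : policy R 'I_3 'I_2) (vp : valid_policy Ei p) h u i : u <= 1 ->
  \sum_(o : option 'I_2) p h u i o * ((o != None)%:R + Vh (rcons h (u, i, o)) u)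
    <= Bst (matched_in h j0) (matched_in h j1) i u.
Proof.
move=> u1.
have [p0 [p1 pE]] := vp h u i.
rewrite -[X in _ <= X]mul1r.
rewrite -[X in _ <= X * _]p1 big_distrl /=; apply: ler_sum => o _.
case: (eqVneq (p h u i o) 0) => [->|pn0]; first by rewrite !mul0r.
have pp : 0 < p h u i o by rewrite lt_def pn0 p0.
apply: ler_wpM2l; first exact: p0.
have w1 := W1_le1 u; have w2 := @W2_le u u1.
rewrite /Vh !matched_rcons /=.
case: o pn0 pp => [j|] pn0 pp /=.
- have [hE hm] := pE j pp.
  move: hE hm; rewrite inE /=.
  case: (ord2 j) => ->; case: (ord3 i) => ->; rewrite /= ?orbT ?orbF //;
  case: (matched_in h j0); case: (matched_in h j1) => //= _ _; rewrite /Vst /=; lra.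
- rewrite !orbF add0r /Vst /Bst.
  case: (matched_in h j0); case: (matched_in h j1) => //=; case: ifP => _; lra.
Qed.

Lemma lami_ge0 i : 0 <= lami i.
Proof. rewrite /lami; case: ifP => _; [have := ln2_gt0; lra | exact: ltW cc_gt0]. Qed.

Lemma W1_ge0 u : u <= 1 -> 0 <= W1 u.
Proof.
move=> u1; rewrite /W1 subr_ge0 expR_le1 /L.
have := ln2_gt0; nra.
Qed.

Lemma Gst_ge0 m0 m1 u : u <= 1 -> 0 <= Gst m0 m1 u.
Proof.
move=> u1; have := @W1_ge0 u u1; have := ln2_gt0; have := cc_gt0.
rewrite /Gst /L; case: m0; case: m1 => /=; nra.
Qed.

Lemma Vst_ge0 m0 m1 s : s <= 1 -> 0 <= Vst m0 m1 s.
Proof.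
rewrite le_eqVlt => /predU1P[->|s1].
  rewrite /Vst /W1 /W2 subrr !mulr0 expR0; case: m0; case: m1 => //=; lra.
rewrite -lee_fin -ftc_state //; apply: integral_ge0 => u.
rewrite /= in_itv /= => /andP[_ u1].
by rewrite lee_fin mulr_ge0 ?expR_ge0 ?Gst_ge0.
Qed.

Lemma exp_ge0 (p : policy R 'I_3 'I_2) (vp : valid_policy Ei p) k :
  forall h s, (0 <= exp_matches_k lami p k h s)%E.
Proof.
elim: k => [|k IH] h s //=.
apply: integral_ge0 => u _.
apply: mule_ge0; first by rewrite lee_fin expR_ge0.
apply: sume_ge0 => i _; apply: sume_ge0 => o _.
have [p0 _] := vp h u i.
apply: mule_ge0; first by rewrite lee_fin mulr_ge0 ?lami_ge0 ?p0.
by apply: adde_ge0; [rewrite lee_fin ler0n | exact: IH].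
Qed.

Lemma exp_le (p : policy R 'I_3 'I_2) (vp : valid_policy Ei p) k :
  forall h s, s <= 1 -> (exp_matches_k lami p k h s <= (Vh h s)%:E)%E.
Proof.
elim: k => [|k IH] h s s1 /=.
  by rewrite lee_fin Vst_ge0.
move: s1; rewrite le_eqVlt => /predU1P[->|s1].
  by rewrite set_itv1 integral_set1 lee_fin Vst_ge0.
rewrite /Vh -ftc_state //; apply: int_mono.
- move=> u _.
  apply: mule_ge0; first by rewrite lee_fin expR_ge0.
  apply: sume_ge0 => i _; apply: sume_ge0 => o _.
  have [p0 _] := vp h u i.
  apply: mule_ge0; first by rewrite lee_fin mulr_ge0 ?lami_ge0 ?p0.
  by apply: adde_ge0; [rewrite lee_fin ler0n | exact: exp_ge0].
- move=> u; rewrite /= in_itv /= => /andP[_ u1].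
  rewrite total_rate_i -sumB EFinM; apply: lee_wpmul2l; first by rewrite lee_fin expR_ge0.
  rewrite -sumEFin; apply: lee_sum => i _.
  apply: (@le_trans _ _ ((lami i * \sum_(o : option 'I_2) p h u i o *
         ((o != None)%:R + Vh (rcons h (u, i, o)) u))%:E)).
    rewrite big_distrr -sumEFin; apply: lee_sum => o _.
    have [p0 _] := vp h u i.
    apply: (@le_trans _ _ ((lami i * p h u i o)%:E * ((o != None)%:R + Vh (rcons h (u, i, o)) u)%:E)%E); last first.
      by rewrite -EFinM /= mulrA.
    apply: lee_wpmul2l; first by rewrite lee_fin mulr_ge0 ?lami_ge0 ?p0.
    by rewrite EFinD; apply: leeD2l; apply: IH.
  rewrite lee_fin; apply: ler_wpM2l; first exact: lami_ge0.
  exact: opt_bound.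
Qed.

Lemma obj_eq (x : 'I_3 -> 'I_2 -> R) :
  JL_objective Ei x = \sum_j \sum_(i | (i, j) \in Ei) x i j.
Proof.
under eq_bigr do rewrite big_mkcond.
rewrite exchange_big pair_bigA /= /JL_objective big_mkcond /=.
by apply: eq_bigr => -[a b] _.
Qed.

Definition x0 (i : 'I_3) (j : 'I_2) : R :=
  if (i, j) \in Ei then (if val i == 0%N then ln 2 else cc) else 0.

Lemma x0_feas : JL_feasible Ei lami x0.
Proof.
have l0 := ln2_gt0; have c0 := cc_gt0.
split; [|split; [|split; [|split]]].
- move=> i j; rewrite /x0; case: ifP => _; [case: ifP => _; lra | lra].
- by move=> i j /negbTE; rewrite /x0 => ->.
- move=> i; rewrite big_mkcond !big_ord_recr big_ord0 /=.
  case: (ord3 i) => ->; rewrite /x0 /lami !inE /= /cc; lra.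
- move=> j; rewrite big_mkcond !big_ord_recr big_ord0 /=.
  case: (ord2 j) => ->; rewrite /x0 /lami !inE /= /cc; lra.
- move=> j; rewrite big_mkcond !big_ord_recr big_ord0 /=.
  have m0 : Num.max (2 * ln 2 - 2 * ln (2:R)) 0 = 0 by rewrite subrr maxxx.
  have e : 2 * cc - cc = cc by ring.
  have m1 : Num.max (2 * cc - cc) 0 = cc by rewrite e max_l // ltW.
  case: (ord2 j) => ->; rewrite /x0 /lami !inE /= ?m0 ?m1 ?maxxx; rewrite /cc; lra.
Qed.

Lemma x0_obj : JL_objective Ei x0 = 2.
Proof.
rewrite obj_eq !big_ord_recr big_ord0 /=.
rewrite !big_mkcond !big_ord_recr !big_ord0 /= /x0 !inE /=.
rewrite big_mkcond !big_ord_recr big_ord0 /= !inE /= /cc; ring.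
Qed.

Lemma JL2 : JL_value Ei lami 2.
Proof.
split; first by exists x0; split; [exact: x0_feas | exact: x0_obj].
move=> x [_ [_ [_ [hj _]]]].
rewrite obj_eq.
apply: (@le_trans _ _ (\sum_(j < 2) (1:R))); first by apply: ler_sum => j _; exact: hj.
by rewrite sumr_const card_ord.
Qed.

Lemma lami_gt0 i : 0 < lami i.
Proof. rewrite /lami; case: ifP => _; [have := ln2_gt0; lra | exact: cc_gt0]. Qed.

Lemma W2_0 : W2 0 / 2 = jl_bound R.
Proof.
have eA2 : expR (-2) = (expR 1 ^+ 2)^-1 :> R.
  by rewrite -expRM_natl -expRN mulr1.
have eL : expR (- L) = (2 * expR 1)^-1 :> R.
  by rewrite /L opprD expRD !expRN lnK ?posrE // invfM mulrC.
have ccnz : cc != 0 by rewrite gt_eqF // cc_gt0.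
have enz : expR 1 != 0 :> R by rewrite gt_eqF // expR_gt0.
rewrite /W2 /jl_bound subr0 !mulr1 eA2 eL.
move: ccnz; rewrite /cc => ccnz.
field.
by rewrite ccnz enz.
Qed.

Lemma ALG_le (p : policy R 'I_3 'I_2) (vp : valid_policy Ei p) :
  (ALG lami p <= (W2 0)%:E)%E.
Proof.
apply: ge_ereal_sup => _ [k _ <-].
exact: (@exp_le p vp k [::] 0 ler01).
Qed.
End H.

Theorem mainTheorem18 (R : realType) :
  exists (nI nJ : nat) (E : {set 'I_nI * 'I_nJ}) (lam : 'I_nI -> R),
    (forall i, 0 < lam i) /\
    exists v : R,
      JL_value E lam v /\ 0 < v /\
      forall p : policy R 'I_nI 'I_nJ, valid_policy E p ->
        (ALG lam p * (v^-1)%:E <= (jl_bound R)%:E)%E.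
Proof.
exists 3%N, 2%N, Ei, (@lami R); split; first exact: lami_gt0.
exists 2; split; first exact: JL2.
split; first by [].
move=> p vp.
apply: (@le_trans _ _ ((@W2 R 0)%:E * (2^-1)%:E)%E).
  apply: lee_wpmul2r; first by rewrite lee_fin invr_ge0 ler0n.
  exact: ALG_le.
by rewrite -EFinM (@W2_0 R).
Qed.
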